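(* Let $q=3^m$ with $m\ge1$. Then for every $i\in\{0,1,2\}$, $$\#\{x\in\mathbb{F}_q:\ \mathrm{Tr}_{\mathbb{F}_q/\mathbb{F}_3}(x)=i,\ \mathrm{Tr}_{\mathbb{F}_q/\mathbb{F}_3}(x^2)=0\}\ge\frac{q-6\sqrt q}{9}.$$
   Context: $\mathrm{Tr}_{\mathbb{F}_q/\mathbb{F}_3}$ is the absolute trace from $\mathbb{F}_q$ to $\mathbb{F}_3$. *)

(* Defs.v *)
From mathcomp Require Import all_boot all_order all_algebra all_field.
Set Implicit Arguments. Unset Strict Implicit. Unset Printing Implicit Defensive.
Import GRing.Theory Num.Theory.
Local Open Scope ring_scope.

(* Absolute trace Tr_{F_q/F_3}(x) = sum_{k<m} x^(3^k), for a finite field F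
   of order q = 3^m; its value lies in the prime field F_3 = {0,1,2} of F. *)
Definition abs_trace3 (F : finFieldType) (m : nat) (x : F) : F :=
  \sum_(k < m) x ^+ (3 ^ k).

(* Main.v *)
Require Import Defs.
From mathcomp Require Import all_boot all_order all_algebra all_field.
From mathcomp Require Import zify ring.
Import Order.TTheory GRing.Theory Num.Theory.
Set Implicit Arguments. Unset Strict Implicit.
Local Open Scope ring_scope.

Lemma frobD3 (F : finFieldType) (ch : 3%N \in [pchar F]) (x y : F) k :
  (x + y) ^+ (3 ^ k) = x ^+ (3 ^ k) + y ^+ (3 ^ k).
Proof.
elim: k => [|k IH]; first by rewrite !expr1.
have h3 : forall a b : F, (a + b) ^+ 3 = a ^+ 3 + b ^+ 3.
  by move=> a b; exact: (rmorphD (pFrobenius_aut ch) a b).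
by rewrite expnSr !exprM IH h3.
Qed.

Lemma trD (F : finFieldType) m (ch : 3%N \in [pchar F]) (x y : F) :
  abs_trace3 m (x + y) = abs_trace3 m x + abs_trace3 m y.
Proof. by rewrite /abs_trace3 -big_split; apply: eq_bigr => k _; rewrite frobD3. Qed.

Lemma tr0 (F : finFieldType) m : abs_trace3 m (0 : F) = 0.
Proof. by rewrite /abs_trace3 big1 // => k _; rewrite expr0n expn_eq0. Qed.

Lemma trN (F : finFieldType) m (ch : 3%N \in [pchar F]) (x : F) :
  abs_trace3 m (- x) = - abs_trace3 m x.
Proof. by apply/eqP; rewrite -subr_eq0 opprK -trD // addNr tr0. Qed.

Lemma trMn (F : finFieldType) m (ch : 3%N \in [pchar F]) (x : F) k :
  abs_trace3 m (x *+ k) = abs_trace3 m x *+ k.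
Proof. elim: k => [|k IH]; first by rewrite !mulr0n tr0. by rewrite !mulrS trD // IH. Qed.

Lemma tr3 (F : finFieldType) m (ch : 3%N \in [pchar F]) (hF : #|F| = (3 ^ m)%N) (x : F) :
  (1 <= m)%N -> abs_trace3 m x ^+ 3 = abs_trace3 m x.
Proof.
case: m hF => // n hF _.
have e3 : forall z : F, z ^+ 3 = pFrobenius_aut ch z by [].
rewrite /abs_trace3 e3 rmorph_sum /=.
rewrite big_ord_recr big_ord_recl /= -e3 -exprM -expnSr -hF expf_card addrC.
by congr (_ + _); apply: eq_bigr => k _; rewrite -e3 -exprM -expnSr.
Qed.
Lemma P3 (F : finFieldType) (ch : 3%N \in [pchar F]) (t : F) :
  t ^+ 3 = t -> exists k : 'I_3, t = (k : nat)%:R.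
Proof.
move=> h.
have c3 : (3%:R : F) = 0 by apply/eqP; rewrite -(dvdn_pcharf ch).
have : t * (t - 1) * (t - 2%:R) = 0.
  have -> : t * (t - 1) * (t - 2%:R) = t ^+ 3 - t + 3%:R * (t - t ^+ 2) by ring.
  by rewrite c3 mul0r addr0 h subrr.
move/eqP; rewrite !mulf_eq0 !subr_eq0 -orbA => /or3P[] /eqP ->.
- by exists (@Ordinal 3 0 isT).
- by exists (@Ordinal 3 1 isT).
- by exists (@Ordinal 3 2 isT).
Qed.

Lemma ker_bound (F : finFieldType) m : (1 <= m)%N ->
  (#|[set y : F | abs_trace3 m y == 0%R]| <= 3 ^ m.-1)%N.
Proof.
case: m => // n _ /=.
pose p : {poly F} := \sum_(k < n.+1) 'X^(3 ^ k).
have hp : forall y, p.[y] = abs_trace3 n.+1 y.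
  by move=> y; rewrite /p horner_sum; apply: eq_bigr => k _; rewrite hornerXn.
have sp : size p = (3 ^ n).+1.
  rewrite /p big_ord_recr /= addrC size_polyDl size_polyXn //.
  apply: leq_ltn_trans (size_sum _ _ _) _.
  rewrite ltnS; apply/bigmax_leqP => k _; rewrite size_polyXn.
  by rewrite ltn_exp2l.
have pn0 : p != 0 by rewrite -size_poly_eq0 sp.
have := max_poly_roots pn0 (_ : all (root p) (enum [set y : F | abs_trace3 n.+1 y == 0])) (enum_uniq _).
rewrite -cardE sp ltnS; apply.
by apply/allP => y; rewrite mem_enum inE /root hp.
Qed.

Lemma cardsum (F : finType) (P : pred F) : #|[set y | P y]| = (\sum_y (P y : nat))%N.
Proof. by rewrite -sum1_card big_mkcond; apply: eq_bigr => y _; rewrite inE; case: (P y). Qed.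

Lemma natF_neq (F : finFieldType) (ch : 3%N \in [pchar F]) (a b : nat) :
  (a < b < 3)%N -> (a%:R : F) != b%:R.
Proof.
case/andP=> ab b3; rewrite eq_sym -subr_eq0 -natrB ?(ltnW ab) //.
rewrite -(dvdn_pcharf ch); apply/negP => /dvdn_leq; lia.
Qed.

Lemma natF_eq (F : finFieldType) (ch : 3%N \in [pchar F]) (j k : 'I_3) :
  ((j : nat)%:R == (k : nat)%:R :> F) = (j == k).
Proof.
case: (ltngtP j k) => [h|h|h].
- by rewrite (negbTE (natF_neq ch _)) ?h ?ltn_ord //; apply/esym/negbTE; rewrite neq_ltn h.
- by rewrite eq_sym (negbTE (natF_neq ch _)) ?h ?ltn_ord //; apply/esym/negbTE; rewrite neq_ltn h orbT.
- by rewrite h eqxx; apply/esym/eqP/val_inj.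
Qed.

Lemma sum3_one (F : finFieldType) (ch : 3%N \in [pchar F]) (t : F) :
  t ^+ 3 = t -> (\sum_(k < 3) (t == (k : nat)%:R : nat))%N = 1%N.
Proof.
case/(P3 ch) => j ->; rewrite (bigD1 j) //= eqxx big1 // => k kj.
by rewrite natF_eq // eq_sym (negbTE kj).
Qed.

Lemma fiber (F : finFieldType) m (ch : 3%N \in [pchar F]) (hF : #|F| = (3 ^ m)%N) :
  (1 <= m)%N -> forall k : 'I_3,
  #|[set y : F | abs_trace3 m y == (k : nat)%:R]| = (3 ^ m.-1)%N.
Proof.
move=> m1.
pose A (k : 'I_3) := [set y : F | abs_trace3 m y == (k : nat)%:R].
have le0 : forall k, (#|A k| <= #|A ord0|)%N.
  move=> k; case: (set_0Vmem (A k)) => [->|[y0 hy0]]; first by rewrite cards0.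
  rewrite -(card_imset _ (addIr (- y0))).
  apply: subset_leq_card; apply/subsetP => z /imsetP [y hy ->].
  move: hy hy0; rewrite !inE trD // trN // => /eqP -> /eqP ->.
  by rewrite subrr.
have sum : (\sum_(k < 3) #|A k|)%N = #|F|.
  rewrite /A; under eq_bigr do rewrite cardsum.
  rewrite exchange_big /=.
  under eq_bigr do rewrite sum3_one ?tr3 //.
  by rewrite sum1_card.
have kb := ker_bound F m1.
have e : (3 ^ m = 3 * 3 ^ m.-1)%N by case: m m1 {kb hF sum le0 A} => // n _ /=; rewrite expnS.
pose c (j : nat) := #|[set y : F | abs_trace3 m y == j%:R]|.
have s : (c 0 + c 1 + c 2 = 3 * 3 ^ m.-1)%N.
  by move: sum; rewrite !big_ord_recr big_ord0 /= add0n hF e.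
have l1 : (c 1 <= c 0)%N := le0 (@Ordinal 3 1 isT).
have l2 : (c 2 <= c 0)%N := le0 (@Ordinal 3 2 isT).
have l0 : (c 0 <= 3 ^ m.-1)%N := kb.
case=> k; case: k => [|[|[|]]] // ? /=.
- by change (c 0 = 3 ^ m.-1)%N; lia.
- by change (c 1 = 3 ^ m.-1)%N; lia.
- by change (c 2 = 3 ^ m.-1)%N; lia.
Qed.

Lemma fiberM (F : finFieldType) m (ch : 3%N \in [pchar F]) (hF : #|F| = (3 ^ m)%N)
  (m1 : (1 <= m)%N) (c t : F) : c != 0 -> t ^+ 3 = t ->
  (\sum_y (abs_trace3 m (c * y)%R == t : nat))%N = (3 ^ m.-1)%N.
Proof.
move=> cn0 /(P3 ch) [k ->].
rewrite -(fiber ch hF m1 k) cardsum.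
by rewrite [RHS](reindex_inj (mulfI cn0)).
Qed.

Lemma total3 (F : finFieldType) (ch : 3%N \in [pchar F]) (g : F -> F) :
  (forall y, g y ^+ 3 = g y) ->
  (\sum_(k < 3) #|[set y | g y == (k : nat)%:R]|)%N = #|F|.
Proof.
move=> hg; under eq_bigr do rewrite cardsum.
rewrite exchange_big /=.
under eq_bigr do rewrite sum3_one ?hg //.
by rewrite sum1_card.
Qed.

Lemma sq3 (F : finFieldType) (ch : 3%N \in [pchar F]) (g : F -> F) :
  (forall y, g y ^+ 3 = g y) ->
  (\sum_x \sum_y (g x == g y : nat))%N =
  (\sum_(k < 3) #|[set y | g y == (k : nat)%:R]| ^ 2)%N.
Proof.
move=> hg.
have e : forall x y, (g x == g y : nat) = (\sum_(k < 3) (g x == (k : nat)%:R) * (g y == (k : nat)%:R))%N.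
  move=> x y; have [j hj] := P3 ch (hg x); rewrite hj.
  rewrite (bigD1 j) //= eqxx mul1n big1 ?addn0 1?eq_sym // => k kj.
  by rewrite natF_eq // eq_sym (negbTE kj).
under eq_bigr do under eq_bigr do rewrite e.
under eq_bigr do rewrite exchange_big /=.
rewrite exchange_big /=; apply: eq_bigr => k _.
rewrite cardsum expnS expn1 big_distrl /=; apply: eq_bigr => x _.
by rewrite big_distrr.
Qed.

Lemma pairs (F : finFieldType) m (ch : 3%N \in [pchar F]) (hF : #|F| = (3 ^ m)%N)
  (m1 : (1 <= m)%N) (f w r : F -> F) :
  (forall h, h != 0 -> w h != 0) -> (forall h, r h ^+ 3 = r h) ->
  (forall h y, h != 0 -> (f (h + y) == f y) = (abs_trace3 m (w h * y) == r h)) ->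
  (\sum_x \sum_y (f x == f y : nat))%N = (#|F| + (#|F|.-1) * 3 ^ m.-1)%N.
Proof.
move=> hw hr hf.
rewrite exchange_big /=.
under eq_bigr => y _ do rewrite (reindex_inj (addIr y)) /=.
rewrite exchange_big /= (bigD1 0) //=.
under eq_bigr do rewrite add0r eqxx.
rewrite sum1_card; congr (_ + _)%N.
under eq_bigr => h hn0 do under eq_bigr do rewrite hf //.
under eq_bigr => h hn0 do rewrite fiberM // ?hw //.
by rewrite sum_nat_const cardC1.
Qed.
Lemma arith (n c0 c1 c2 : nat) : (1 <= n)%N ->
  (c0 + c1 + c2 = 3 * n)%N -> (c0 ^ 2 + c1 ^ 2 + c2 ^ 2 = 3 * n + (3 * n).-1 * n)%N ->
  ((3 * n)%:Z - (3 * c0)%:Z) * ((3 * n)%:Z - (3 * c0)%:Z) <= (4 * (3 * n))%:Z.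
Proof.
move=> n1 s1 s2.
have h : (c0 ^ 2 + c1 ^ 2 + c2 ^ 2 + n = 3 * n + 3 * n * n)%N.
  rewrite s2; case: n n1 {s1 s2} => // n _; rewrite mulnS /=; lia.
have hh := (nat_Cauchy c1 c2).1.
rewrite !expnS !expn0 !muln1 in h hh.
have e1 : ((c1 + c2) * (c1 + c2) + (6 * n) * c0 = 9 * (n * n) + c0 * c0)%N.
  have [d E] : exists d, (3 * n = c0 + d)%N by exists (3 * n - c0)%N; lia.
  have -> : (c1 + c2 = d)%N by lia.
  have -> : (6 * n = 2 * (c0 + d))%N by lia.
  have -> : (9 * (n * n) = (c0 + d) * (c0 + d))%N by rewrite -E; lia.
  nia.
lia.
Qed.

Lemma sqrt_step (q : nat) (d : int) : d * d <= (4 * q)%:Z ->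
  (d%:~R : algC) <= 2 * sqrtC (q%:R).
Proof.
move=> h.
have s0 : (0 : algC) <= 2 * sqrtC (q%:R) by rewrite mulr_ge0 ?ler0n ?sqrtC_ge0.
have [d0|d0] := lerP d 0.
  by apply: le_trans s0; rewrite lerz0.
rewrite -ler_sqr; last 2 first.
- by rewrite nnegrE ler0z ltW.
- by rewrite nnegrE.
rewrite exprMn sqrtCK expr2 -intrM.
have -> : (2 * 2 * q%:R : algC) = ((4 * q)%N%:Z)%:~R by rewrite -pmulrn natrM -natrM.
by rewrite ler_int.
Qed.

Lemma alg (R : comRingType) (N q n c2 c3 c4 s : R) :
  3%:R * N + q = n + c2 + c3 + c4 -> q = 3%:R * n ->
  N * 9%:R - (q - 6%:R * s) =
  (2%:R * s - (q - 3%:R * c2)) + (2%:R * s - (q - 3%:R * c3)) + (2%:R * s - (q - 3%:R * c4)).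
Proof.
move=> E1 E2.
have -> : c4 = 3%:R * N + q - n - c2 - c3 by rewrite E1; ring.
rewrite E2; ring.
Qed.

Lemma cubeD (F : finFieldType) (ch : 3%N \in [pchar F]) (x y : F) :
  (x + y) ^+ 3 = x ^+ 3 + y ^+ 3.
Proof. exact: (frobD3 ch x y 1). Qed.

Lemma cubeN (F : finFieldType) (x : F) : (- x) ^+ 3 = - x ^+ 3.
Proof. by rewrite -mulN1r exprMn -signr_odd expr1 mulN1r. Qed.

Lemma cubeM (F : finFieldType) (x y : F) : x ^+ 3 = x -> y ^+ 3 = y -> (x * y) ^+ 3 = x * y.
Proof. by move=> hx hy; rewrite exprMn hx hy. Qed.

Lemma cubeNat (F : finFieldType) (ch : 3%N \in [pchar F]) (k : nat) : (k%:R : F) ^+ 3 = k%:R.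
Proof. elim: k => [|k IH]; first by rewrite expr0n. by rewrite -addn1 natrD cubeD // IH expr1n. Qed.

Lemma trP (F : finFieldType) m (ch : 3%N \in [pchar F]) (t z : F) :
  t ^+ 3 = t -> t * abs_trace3 m z = abs_trace3 m (t * z).
Proof. by case/(P3 ch) => k ->; rewrite !mulr_natl trMn. Qed.

Lemma lineb (F : finFieldType) m (ch : 3%N \in [pchar F]) (hF : #|F| = (3 ^ m)%N)
  (m1 : (1 <= m)%N) (a b s : F) (g : F -> F) :
  a ^+ 3 = a -> b ^+ 3 = b -> s ^+ 3 = s -> b != 0 ->
  (forall x, g x = b * abs_trace3 m (x ^+ 2) + a * abs_trace3 m x + s) ->
  ((#|F|)%:Z - (3 * #|[set x | g x == 0%R]|)%N%:Z) * ((#|F|)%:Z - (3 * #|[set x | g x == 0%R]|)%N%:Z)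
    <= (4 * #|F|)%N%:Z.
Proof.
move=> ha hb hs bn0 hg.
have hf : forall y, g y ^+ 3 = g y.
  by move=> y; rewrite hg !cubeD // !cubeM ?tr3 // hs.
pose w h := 2%:R * b * h.
pose r h := - (b * abs_trace3 m (h ^+ 2) + a * abs_trace3 m h).
have hw : forall h, h != 0 -> w h != 0.
  move=> h hn0; rewrite /w !mulf_neq0 //.
  by rewrite eq_sym (natF_neq ch (a := 0) (b := 2)).
have hr : forall h, r h ^+ 3 = r h.
  by move=> h; rewrite /r cubeN cubeD // !cubeM ?tr3.
have hp : forall h y, h != 0 -> (g (h + y) == g y) = (abs_trace3 m (w h * y) == r h).
  move=> h y _.
  have E : abs_trace3 m (w h * y) = b * abs_trace3 m (2%:R * h * y).
    by rewrite trP //; congr (abs_trace3 m _); rewrite /w; ring.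
  have E2 : (h + y) ^+ 2 = h ^+ 2 + 2%:R * h * y + y ^+ 2 by ring.
  rewrite E !hg E2 !trD // /r.
  set A := abs_trace3 m (h ^+ 2); set B := abs_trace3 m (2%:R * h * y).
  set C := abs_trace3 m (y ^+ 2); set D := abs_trace3 m h; set G := abs_trace3 m y.
  have -> : b * (A + B + C) + a * (D + G) + s = (b * B - - (b * A + a * D)) + (b * C + a * G + s) by ring.
  by rewrite -{2}(add0r (b * C + a * G + s)) (inj_eq (addIr _)) subr_eq0.
have P := pairs ch hF m1 hw hr hp.
have S := sq3 ch hf; have Tt := total3 ch hf.
rewrite P in S.
pose c j := #|[set y | g y == (j%:R : F)]|.
have e : (3 ^ m = 3 * 3 ^ m.-1)%N by clear -m1; case: m m1 => // n _ /=; rewrite expnS.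
have s1 : (c 0 + c 1 + c 2 = 3 * 3 ^ m.-1)%N.
  by move: Tt; rewrite !big_ord_recr big_ord0 /= add0n hF e.
have s2 : (c 0 ^ 2 + c 1 ^ 2 + c 2 ^ 2 = 3 * 3 ^ m.-1 + (3 * 3 ^ m.-1).-1 * 3 ^ m.-1)%N.
  by move: S; rewrite !big_ord_recr big_ord0 /= add0n hF e.
have n1 : (1 <= 3 ^ m.-1)%N by rewrite expn_gt0.
have := arith n1 s1 s2.
by rewrite hF e.
Qed.

Lemma pointwise (F : finFieldType) (ch : 3%N \in [pchar F]) (u v : F) :
  u ^+ 3 = u -> v ^+ 3 = v ->
  ((v == 0%R) + (u == 0%R) + ((u + v)%R == 0%R) + ((u - v)%R == 0%R) = 1 + 3 * ((u == 0%R) && (v == 0%R)))%N.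
Proof.
move=> /(P3 ch) [j ->] /(P3 ch) [k ->].
rewrite subr_eq0 natF_eq // -natrD -!(dvdn_pcharf ch).
by case: j k => [[|[|[|j]]] hj] [[|[|[|k]]] hk].
Qed.

Theorem lemma6 (F : finFieldType) (m : nat) :
  (1 <= m)%N -> #|F| = (3 ^ m)%N ->
  forall i : 'I_3,
    ((#|F|%:R - 6 * sqrtC (#|F|%:R)) / 9 : algC)
      <= #|[set x : F | (abs_trace3 m x == (i : nat)%:R)
                        && (abs_trace3 m (x ^+ 2) == 0)]|%:R.
Proof.
move=> m1 hF i.
have ch : 3%N \in [pchar F] by apply: (card_finPcharP hF).
set T := abs_trace3 m.
set N := #|[set x : F | _]|.
pose u x := T x - (i : nat)%:R.
pose v x := T (x ^+ 2).
have hu : forall x, u x ^+ 3 = u x.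
  by move=> x; rewrite /u cubeD // cubeN cubeNat // tr3.
have hv : forall x, v x ^+ 3 = v x by move=> x; rewrite /v tr3.
pose cv := #|[set x | v x == 0%R]|.
pose cu := #|[set x | u x == 0%R]|.
pose c3 := #|[set x | u x + v x == 0%R]|.
pose c4 := #|[set x | u x - v x == 0%R]|.
have Hsum : (cv + cu + c3 + c4 = #|F| + 3 * N)%N.
  rewrite /cv /cu /c3 /c4 /N !cardsum -!big_split /= big_distrr /=.
  rewrite -[#|F|]sum1_card -big_split /=.
  apply: eq_bigr => x _; rewrite pointwise //.
  by rewrite /u subr_eq0.
have Hcu : cu = (3 ^ m.-1)%N.
  rewrite -(fiber ch hF m1 i) /cu; apply: eq_card => x; rewrite !inE /u subr_eq0.
  by [].
have e : (3 ^ m = 3 * 3 ^ m.-1)%N by clear -m1; case: m m1 => // n _ /=; rewrite expnS.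
have cube0 : (0 : F) ^+ 3 = 0 by rewrite expr0n.
have cube1 : (1 : F) ^+ 3 = 1 by rewrite expr1n.
have cubem1 : (-1 : F) ^+ 3 = -1 by rewrite cubeN expr1n.
have cubei : (- (i : nat)%:R : F) ^+ 3 = - (i : nat)%:R by rewrite cubeN cubeNat.
have gv : forall x, v x = 1 * T (x ^+ 2) + 0 * T x + 0 by move=> x; rewrite /v; ring.
have g3 : forall x, u x + v x = 1 * T (x ^+ 2) + 1 * T x + - (i : nat)%:R by move=> x; rewrite /u /v; ring.
have g4 : forall x, u x - v x = (-1) * T (x ^+ 2) + 1 * T x + - (i : nat)%:R by move=> x; rewrite /u /v; ring.
have m1n0 : (-1 : F) != 0 by rewrite oppr_eq0 oner_neq0.
have Bv := lineb ch hF m1 cube0 cube1 cube0 (oner_neq0 _) gv.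
have B3 := lineb ch hF m1 cube1 cube1 cubei (oner_neq0 _) g3.
have B4 := lineb ch hF m1 cube1 cubem1 cubei m1n0 g4.
have key : forall c : nat,
    ((#|F|)%:Z - (3 * c)%N%:Z) * ((#|F|)%:Z - (3 * c)%N%:Z) <= (4 * #|F|)%N%:Z ->
    (#|F|%:R - 3 * c%:R : algC) <= 2 * sqrtC #|F|%:R.
  move=> c h; have := sqrt_step h.
  by rewrite rmorphB /= -!pmulrn natrM.
have K2 := key cv Bv; have K3 := key c3 B3; have K4 := key c4 B4.
rewrite ler_pdivrMr ?ltr0n //.
have E1 : (3%:R * N%:R + #|F|%:R : algC) = (3 ^ m.-1)%:R + cv%:R + c3%:R + c4%:R.
  rewrite -!natrM -!natrD; congr (_%:R); lia.
have E2 : (#|F|%:R : algC) = 3%:R * (3 ^ m.-1)%:R by rewrite hF e natrM.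
rewrite -subr_ge0 (@alg _ _ _ _ _ _ _ _ E1 E2).
by apply: addr_ge0; [apply: addr_ge0|]; rewrite subr_ge0.
Qed.
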